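(* Let $N\ge 2$ be an integer and let $\Delta_N=\{p=(p_1,\dots,p_N)\in[0,1]^N:\ \sum_{i=1}^N p_i=1\}$ be the set of discrete probability distributions on $N$ points. For $p\in\Delta_N$ define the normalized Shannon entropy $$H(p)=\frac{1}{\log N}\Big(-\sum_{i=1}^N p_i\log p_i\Big)\quad(\text{with }0\log 0=0),$$ the disequilibrium $$D_{SQ}(p)=\sum_{i=1}^N\Big(p_i-\frac1N\Big)^2,$$ and the statistical complexity $C_{SQ}(p)=H(p)\,D_{SQ}(p)$. Then the maximum of $C_{SQ}$ over $\Delta_N$ is achieved on a distribution of the form $$p_k=p_{\max},\qquad p_i=\frac{1-p_{\max}}{N-1}\ \text{ for all } i\in\{1,\dots,N\}\setminus\{k\},$$ for some index $k\in\{1,\dots,N\}$ and some constant $p_{\max}\in[0,1]$; that is, at the appearance of a single component of arbitrary index $k$ over a uniform distribution of the remaining components.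
   Context: Logarithms are taken in a fixed base; the base cancels in the normalization of $H$. *)

(* Defs.v *)
From HB Require Import structures.
From mathcomp Require Import all_boot all_order all_algebra.
From mathcomp Require Import all_classical all_reals all_analysis.
Set Implicit Arguments. Unset Strict Implicit. Unset Printing Implicit Defensive.
Import Order.TTheory GRing.Theory Num.Theory.
Local Open Scope ring_scope.

Section Defs.
Variable R : realType.

Definition in_simplex (N : nat) (p : 'I_N -> R) : Prop :=
  (forall i, 0 <= p i <= 1) /\ \sum_(i < N) p i = 1.

(* x log x with the convention 0 log 0 = 0 (natural log; the base cancels) *)
Definition xlnx (x : R) : R := if x == 0 then 0 else x * ln x.

Definition entropyN (N : nat) (p : 'I_N -> R) : R :=
  (- \sum_(i < N) xlnx (p i)) / ln (N%:R).

Definition disequilibrium (N : nat) (p : 'I_N -> R) : R :=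
  \sum_(i < N) (p i - N%:R^-1) ^+ 2.

Definition complexitySQ (N : nat) (p : 'I_N -> R) : R :=
  entropyN p * disequilibrium p.

Definition spike (N : nat) (k : 'I_N) (pmax : R) : 'I_N -> R :=
  fun i => if i == k then pmax else (1 - pmax) / (N.-1)%:R.

End Defs.

(* Main.v *)
Require Import Defs.
From HB Require Import structures.
From mathcomp Require Import all_boot all_order all_algebra.
From mathcomp Require Import all_classical all_reals all_analysis.
From mathcomp Require Import ring lra.
Import Order.TTheory GRing.Theory Num.Theory.
Import numFieldNormedType.Exports.
Local Open Scope ring_scope.

Set Implicit Arguments. Unset Strict Implicit. Unset Printing Implicit Defensive.


Section H.
Variable R : realType.
Definition hh (u : R) := u * ln u.

Lemma hh_bound (u : R) : 0 < u -> u <= 1 -> `|hh u| <= 2 * Num.sqrt u.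
Proof.
move=> u0 u1.
have su0 : 0 < Num.sqrt u by rewrite sqrtr_gt0.
have lnle : ln u <= 0 by rewrite ln_le0.
have hle : hh u <= 0 by rewrite /hh mulr_ge0_le0 // ltW.
rewrite ler0_norm //.
have e1 : ln u = 2 * ln (Num.sqrt u).
  by rewrite -{1}(sqr_sqrtr (ltW u0)) lnXn // mulr_natl.
have e2 : ln ((Num.sqrt u)^-1) < (Num.sqrt u)^-1 by apply: ln_sublinear; rewrite invr_gt0.
rewrite lnV ?posrE // in e2.
have e3 : u = Num.sqrt u * Num.sqrt u by rewrite -expr2 sqr_sqrtr // ltW.
rewrite /hh e1.
have : - (u * (2 * ln (Num.sqrt u))) = 2 * Num.sqrt u * (Num.sqrt u * (- ln (Num.sqrt u))).
  by rewrite {1}e3; ring.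
move=> ->.
apply: (@le_trans _ _ (2 * Num.sqrt u * 1)); last by rewrite mulr1.
rewrite ler_pM2l ?mulr_gt0 //.
have : Num.sqrt u * (- ln (Num.sqrt u)) <= Num.sqrt u * (Num.sqrt u)^-1.
  by rewrite ler_pM2l // ltW.
by rewrite divff ?gt_eqF.
Qed.

Lemma hh_le0 (u : R) : u <= 0 -> hh u = 0.
Proof. by move=> u0; rewrite /hh ln0 // mulr0. Qed.

Lemma hh_cont (x : R) : {for x, continuous hh}.
Proof.

have [x0|x0|->] := ltgtP x 0.
- apply: (@near_cst_continuous R R 0).
  near=> u; apply: hh_le0; apply: ltW.
  near: u; exact: lt_nbhsl.
- apply: continuousM => //; exact: continuous_ln.
- apply/cvgrPdist_le => e e0.
  rewrite /hh mul0r.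
  near=> u.
  rewrite sub0r normrN.
  have [u0|u0] := leP u 0; first by rewrite -/(hh u) hh_le0 // normr0 ltW.
  rewrite -/(hh u); apply: (le_trans (@hh_bound u u0 _)).
    apply: ltW; near: u; exists 1 => //= v; rewrite /ball_ /= sub0r normrN; exact: le_lt_trans (ler_norm v).
  have : Num.sqrt u <= e / 2.
    have -> : e/2 = Num.sqrt ((e/2)^+2) by rewrite sqrtr_sqr ger0_norm // divr_ge0 // ltW.
    rewrite ler_sqrt ?exprn_ge0 ?divr_ge0 ?ltW //.
    near: u.
    exists ((e/2)^+2) => /=; first by rewrite exprn_gt0 // divr_gt0.
    move=> v; rewrite /ball_ /= sub0r normrN; exact: le_lt_trans (ler_norm v).
  lra.
Unshelve. all: by end_near. Qed.

Lemma ln_sub_le (a b : R) : 0 < a -> 0 < b -> ln a - ln b <= (a - b) / b.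
Proof.
move=> a0 b0.
rewrite -ln_div ?posrE //.
have e : a / b = 1 + ((a - b) / b) by field; rewrite gt_eqF.
rewrite e; apply: le_ln1Dx.
have : 0 < a / b by rewrite divr_gt0.
rewrite e; lra.
Qed.

Lemma ln3 (x y z : R) : 0 < z -> z <= y -> y <= x ->
  ln x * (y - z) + ln z * (x - y) <= ln y * (x - z).
Proof.
move=> z0 zy yx.
have y0 : 0 < y by apply: lt_le_trans zy.
have x0 : 0 < x by apply: lt_le_trans yx.
have h1 := @ln_sub_le x y x0 y0.
have h2 := @ln_sub_le z y z0 y0.
have h1' : (y - z) * (ln x - ln y) <= (y - z) * ((x - y) / y).
  by rewrite ler_wpM2l // subr_ge0.
have h2' : (x - y) * (ln z - ln y) <= (x - y) * ((z - y) / y).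
  by rewrite ler_wpM2l // subr_ge0.
have e : (y - z) * ((x - y) / y) + (x - y) * ((z - y) / y) = 0.
  by field; rewrite gt_eqF.
have e2 : ln x * (y - z) + ln z * (x - y) - ln y * (x - z) =
  (y - z) * (ln x - ln y) + (x - y) * (ln z - ln y) by ring.
rewrite -subr_le0 e2 -e; exact: lerD.
Qed.

Lemma is_derive_hh (v : R) : 0 < v -> is_derive v 1 hh (ln v + 1).
Proof.
move=> v0; rewrite /hh.
have dl : is_derive v 1 (@ln R) v^-1 := is_derive1_ln v0.
have dM := is_deriveM (is_derive_id v 1) dl.
apply: (is_derive_eq dM).
rewrite /GRing.scale /= mulr1 mulfV ?gt_eqF //; ring.
Qed.

End H.


Section Curve.
Variable R : realType.
Variables k S Q : R.
Definition Df (u : R) := 2 * (Q - k * u ^+ 2) - (S - k * u) ^+ 2.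
Definition Dd (u : R) := 2 * k * (S - k * u - 2 * u).
Definition sq (u : R) := Num.sqrt (Df u).
Definition Xf (u : R) := (S - k * u + sq u) / 2.
Definition Zf (u : R) := (S - k * u - sq u) / 2.
Definition Gf (u : R) := hh (Xf u) + k * hh u + hh (Zf u).

Lemma dDf (u : R) : is_derive u 1 Df (Dd u).
Proof.
rewrite /Df /Dd; apply: is_derive_eq; rewrite /GRing.scale /=; ring.
Qed.

Lemma dsq (u : R) : 0 < Df u -> is_derive u 1 sq (Dd u / (2 * sq u)).
Proof.
move=> D0.
have h1 : is_derive (Df u) 1 (@Num.sqrt R) (2 * Num.sqrt (Df u))^-1 := is_derive1_sqrt D0.
have := is_derive1_comp h1 (dDf u).
move=> H; apply: (is_derive_eq H).
by rewrite /sq mulrC.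
Qed.

Lemma dXf (u : R) : 0 < Df u -> is_derive u 1 Xf ((- k + Dd u / (2 * sq u)) / 2).
Proof.
move=> D0; have H := dsq D0.
rewrite /Xf; apply: is_derive_eq; rewrite /GRing.scale /=; ring.
Qed.

Lemma dZf (u : R) : 0 < Df u -> is_derive u 1 Zf ((- k - Dd u / (2 * sq u)) / 2).
Proof.
move=> D0; have H := dsq D0.
rewrite /Zf; apply: is_derive_eq; rewrite /GRing.scale /=; ring.
Qed.

Definition dG (u : R) :=
  (ln (Xf u) + 1) * ((- k + Dd u / (2 * sq u)) / 2) + k * (ln u + 1) +
  (ln (Zf u) + 1) * ((- k - Dd u / (2 * sq u)) / 2).

Lemma dGf (u : R) : 0 < Df u -> 0 < u -> 0 < Zf u -> 0 < Xf u ->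
  is_derive u 1 Gf (dG u).
Proof.
move=> D0 u0 Z0 X0.
have hX := is_derive1_comp (is_derive_hh X0) (dXf D0).
have hZ := is_derive1_comp (is_derive_hh Z0) (dZf D0).
have hu := is_derive_hh u0.
have H := is_deriveD (is_deriveD hX (is_deriveZ k hu)) hZ.
apply: (is_derive_eq H).
by rewrite /dG /GRing.scale /=.
Qed.

Lemma dG_ge0 (u : R) : 0 < Df u -> 0 <= k -> 0 < Zf u -> Zf u <= u -> u <= Xf u ->
  0 <= dG u.
Proof.
move=> D0 k0 Z0 Zu uX.
have s0 : 0 < sq u by rewrite /sq sqrtr_gt0.
have key := ln3 Z0 Zu uX.
have e : dG u = k / sq u * (ln u * (Xf u - Zf u) - (ln (Xf u) * (u - Zf u) + ln (Zf u) * (Xf u - u))).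
  rewrite /dG; set lX := ln (Xf u); set lZ := ln (Zf u).
  rewrite /Xf /Zf /Dd; field; by rewrite gt_eqF.
rewrite e; apply: mulr_ge0; first by rewrite divr_ge0 // ltW.
by rewrite subr_ge0.
Qed.

Lemma dZ_lt0 (u : R) : 0 < Df u -> 0 < k -> u < Xf u ->
  (- k - Dd u / (2 * sq u)) / 2 < 0.
Proof.
move=> D0 k0 uX.
have s0 : 0 < sq u by rewrite /sq sqrtr_gt0.
have -> : (- k - Dd u / (2 * sq u)) / 2 = k * (u - Xf u) / sq u.
  rewrite /Xf /Dd; field; by rewrite gt_eqF.
by rewrite pmulr_llt0 ?invr_gt0 // pmulr_rlt0 // subr_lt0.
Qed.

Lemma der_cont (f : R -> R) : (forall u, derivable f u 1) -> continuous f.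
Proof.
move=> H u; apply/differentiable_continuous/derivable1_diffP; exact: H.
Qed.

Lemma cont_sq : continuous sq.
Proof.
move=> u; apply: continuous_comp; last exact: sqrt_continuous.
by apply: der_cont => v; case: (dDf v).
Qed.

Lemma cont_Xf : continuous Xf.
Proof.
have -> : Xf = (fun u => (S - k * u) / 2) + (fun u => sq u * 2^-1).
  by apply/funext => u; rewrite /Xf -[RHS]/((S - k*u)/2 + sq u / 2); ring.
move=> u; apply: continuousD.
  apply: der_cont => v.
  have H : is_derive v 1 (fun u => (S - k * u) / 2) (- k / 2).
    by apply: is_derive_eq; rewrite /GRing.scale /=; ring.
  by case: H.
apply: continuousM; first exact: cont_sq.
exact: cst_continuous.
Qed.

Lemma cont_Zf : continuous Zf.
Proof.
have -> : Zf = (fun u => (S - k * u) / 2) + (fun u => - sq u * 2^-1).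
  by apply/funext => u; rewrite /Zf -[RHS]/((S - k*u)/2 + - sq u / 2); ring.
move=> u; apply: continuousD.
  apply: der_cont => v.
  have H : is_derive v 1 (fun u => (S - k * u) / 2) (- k / 2).
    by apply: is_derive_eq; rewrite /GRing.scale /=; ring.
  by case: H.
apply: continuousM; last exact: cst_continuous.
apply: continuousN; exact: cont_sq.
Qed.

Lemma cont_Gf : continuous Gf.
Proof.
move=> u.
have -> : Gf = (fun u => hh (Xf u) + k * hh u) + (fun u => hh (Zf u)) by [].
apply: continuousD; last first.
  apply: continuous_comp; [exact: cont_Zf | exact: hh_cont].
apply: continuousD.
  apply: continuous_comp; [exact: cont_Xf | exact: hh_cont].
apply: continuousM; [exact: cst_continuous | exact: hh_cont].
Qed.
End Curve.


Section Core.
Variable R : realType.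

Lemma core3 (k x y z : R) : 0 < k -> 0 <= z -> z <= y -> y <= x -> z < x ->
  exists t q, [/\ z <= q, q <= t, t + (k+1)*q = x + k*y + z,
     t^+2 + (k+1)*q^+2 = x^+2 + k*y^+2 + z^+2 &
     hh t + (k+1) * hh q <= hh x + k * hh y + hh z].
Proof.
move=> k0 z0 zy yx zx.
set S := x + k*y + z. set Q := x^+2 + k*y^+2 + z^+2.
pose a := (k+1)*(k+2). pose m := S/(k+2).
pose P u := Df k S Q u - (S - k*u - 2*u)^+2.
have a0 : 0 < a by rewrite /a mulr_gt0 //; lra.
have k2 : k + 2 != 0 by rewrite gt_eqF //; lra.
have Py : P y = 4*(x-y)*(y-z) by rewrite /P /Df /S /Q; ring.
have Py0 : 0 <= P y by rewrite Py mulr_ge0 ?mulr_ge0 ?subr_ge0 //.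
pose W := (y - m)^+2 + P y / (2*a).
have PW u : P u = 2*a*(W - (u-m)^+2).
  rewrite /W /m /a /P /Df; field.
  by rewrite k2 /= gt_eqF //; lra.
have W0 : (y-m)^+2 <= W by rewrite /W lerDl divr_ge0 // mulr_ge0 // ltW.
pose rho := Num.sqrt W.
have Wge0 : 0 <= W by apply: le_trans W0; exact: sqr_ge0.
have rho0 : 0 <= rho by exact: sqrtr_ge0.
have rhoW : rho^+2 = W by rewrite sqr_sqrtr.
have ym : `|y - m| <= rho by rewrite -sqrtr_sqr ler_sqrt.
pose r1 := m - rho.
have [ym1 ym2] : - rho <= y - m /\ y - m <= rho.
  by move: ym; rewrite ler_norml => /andP[].
have r1y : r1 <= y by rewrite /r1; lra.
have r1m : r1 <= m by rewrite /r1; lra.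
have Pin u : r1 < u -> u < y -> 0 < P u.
  move=> r1u uy; rewrite PW; apply: mulr_gt0; first by rewrite mulr_gt0.
  rewrite subr_gt0 -rhoW.
  have h1 : - rho < u - m by rewrite /r1 in r1u; lra.
  have h2 : u - m < rho by lra.
  nra.
have Dpos u : r1 < u -> u < y -> 0 < Df k S Q u.
  move=> r1u uy; have := Pin u r1u uy; rewrite /P.
  have := sqr_ge0 (S - k * u - 2 * u); lra.
have XuZ u : r1 < u -> u < y -> Zf k S Q u < u /\ u < Xf k S Q u.
  move=> r1u uy.
  have hP := Pin u r1u uy; rewrite /P in hP.
  have hs : `|S - k * u - 2 * u| < sq k S Q u.
    rewrite /sq -sqrtr_sqr ltr_sqrt; last exact: Dpos.
    lra.
  move: hs; rewrite ltr_norml => /andP[h1 h2].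
  rewrite /Xf /Zf; split; lra.
have Dy : Df k S Q y = (x - z)^+2 by rewrite /Df /S /Q; ring.
have sy : sq k S Q y = x - z by rewrite /sq Dy sqrtr_sqr ger0_norm // subr_ge0 ltW.
have Xy : Xf k S Q y = x by rewrite /Xf sy /S; field.
have Zy : Zf k S Q y = z by rewrite /Zf sy /S; field.
have Zmono u : r1 <= u -> u < y -> z < Zf k S Q u.
  move=> r1u uy.
  have hd c : c \in `]u, y[ -> is_derive c 1 (Zf k S Q) ((- k - Dd k S c / (2 * sq k S Q c)) / 2).
    rewrite in_itv /= => /andP[uc cy]; apply: dZf; apply: Dpos => //; lra.
  have hc : ({within `[u, y], continuous (Zf k S Q)})%classic.
    apply: continuous_subspaceT; exact: cont_Zf.
  have [c] := MVT uy hd hc.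
  rewrite in_itv /= => /andP[uc cy] e.
  have r1c : r1 < c by lra.
  have := dZ_lt0 (Dpos c r1c cy) k0 (proj2 (XuZ c r1c cy)).
  move: e; rewrite Zy => e dn.
  have : (- k - Dd k S c / (2 * sq k S Q c)) / 2 * (y - u) < 0.
    by rewrite pmulr_llt0 // subr_gt0.
  lra.
have Pr1 : P r1 = 0.
  rewrite PW -rhoW /r1.
  have -> : m - rho - m = - rho by ring.
  by rewrite sqrrN subrr mulr0.
have mS : S = (k + 2) * m by rewrite /m; field.
have Sr1 : 0 <= S - (k+2)*r1.
  rewrite subr_ge0 mS ler_wpM2l //; lra.
have Dr1 : Df k S Q r1 = (S - (k+2)*r1)^+2.
  move: Pr1; rewrite /P => /eqP; rewrite subr_eq0 => /eqP ->.
  congr (_ ^+ 2); ring.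
have sr1 : sq k S Q r1 = S - (k+2)*r1 by rewrite /sq Dr1 sqrtr_sqr ger0_norm.
have Zr1 : Zf k S Q r1 = r1 by rewrite /Zf sr1; field.
have Xr1 : Xf k S Q r1 = S - (k+1) * r1 by rewrite /Zf /Xf sr1; field.
have zq : z <= r1.
  have [r1y'|r1y'] := ltP r1 y.
    by have := Zmono r1 (lexx r1) r1y'; rewrite Zr1 => /ltW.
  have -> : r1 = y by apply/eqP; rewrite eq_le r1y r1y'.
  done.
have Gmono : Gf k S Q r1 <= Gf k S Q y.
  have hint u : u \in `]r1, y[ -> is_derive u 1 (Gf k S Q) (dG k S Q u) /\ 0 <= dG k S Q u.
    rewrite in_itv /= => /andP[r1u uy].
    have D0 := Dpos u r1u uy.
    have [Zu uX] := XuZ u r1u uy.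
    have zZ := Zmono u (ltW r1u) uy.
    have Z0 : 0 < Zf k S Q u by lra.
    split; first by apply: dGf => //; lra.
    apply: dG_ge0 => //; try lra.
  apply: (@ger0_derive1_le_cc R (Gf k S Q) r1 y).
  - by move=> u /hint [[]].
  - move=> u /hint [H ge].
    by rewrite derive1E derive_val.
  - apply: continuous_subspaceT; exact: cont_Gf.
  - by rewrite in_itv /= lexx r1y.
  - by rewrite in_itv /= lexx r1y.
  - exact: r1y.
exists (S - (k+1) * r1), r1; split => //.
- lra.
- ring.
- have e : P r1 = 2 * (Q - (k+1) * r1^+2 - (S - (k+1)*r1)^+2) by rewrite /P /Df; ring.
  move: e; rewrite Pr1; lra.
- move: Gmono; rewrite /Gf Xr1 Zr1 Xy Zy; lra.
Qed.
End Core.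


Section HT.
Variable R : realType.

Lemma core3w (k x y z : R) : 0 <= k -> 0 <= z -> z <= y -> y <= x ->
  exists t q, [/\ z <= q, q <= t, t + (k+1)*q = x + k*y + z,
     t^+2 + (k+1)*q^+2 = x^+2 + k*y^+2 + z^+2 &
     hh t + (k+1) * hh q <= hh x + k * hh y + hh z].
Proof.
move=> k0 z0 zy yx.
have [->|kpos] := eqVneq k 0.
  exists x, z; split => //; [lra|ring|ring|].
  by rewrite mul0r add0r mul1r addr0.
have [xz|xz] := eqVneq x z.
  have ey : y = x by apply/eqP; rewrite eq_le yx xz zy.
  subst; exists z, z; split => //; [ring|ring|].
  by rewrite mulrDl mul1r addrA.
apply: core3 => //; first by rewrite lt_def kpos.
by rewrite lt_def xz (le_trans zy yx).
Qed.

Lemma seq_min (s : seq R) : s != [::] -> exists2 m, m \in s & forall v, v \in s -> m <= v.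
Proof.
elim: s => [//|a s IH] _.
have [->|sn] := eqVneq s [::].
  by exists a; rewrite ?mem_seq1 // => v; rewrite mem_seq1 => /eqP ->.
have [m ms mle] := IH sn.
have [am|ma] := leP a m.
  exists a; first by rewrite in_cons eqxx.
  move=> v; rewrite in_cons => /orP[/eqP ->//|/mle]; exact: le_trans.
exists m; first by rewrite in_cons ms orbT.
move=> v; rewrite in_cons => /orP[/eqP ->|/mle //]; exact: ltW.
Qed.

Definition sS (s : seq R) := \sum_(v <- s) v.
Definition sQ (s : seq R) := \sum_(v <- s) v ^+ 2.
Definition sH (s : seq R) := \sum_(v <- s) hh v.

Lemma HT n : forall s : seq R, size s = n.+1 -> (forall v, v \in s -> 0 <= v) ->
 exists t q, [/\ q <= t, (exists2 v, v \in s & v <= q), t + n%:R * q = sS s,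
   t^+2 + n%:R * q^+2 = sQ s & hh t + n%:R * hh q <= sH s].
Proof.
elim: n => [|n IH] s.
  case: s => [|v [|]] //= _ _.
  exists v, v; split => //; first by exists v; rewrite ?mem_seq1.
  - by rewrite /sS big_seq1 mul0r addr0.
  - by rewrite /sQ big_seq1 mul0r addr0.
  - by rewrite /sH big_seq1 mul0r addr0.
move=> sz nn.
have sn : s != [::] by apply/eqP => s0; rewrite s0 in sz.
have [m ms mle] := seq_min sn.
have sz' : size (rem m s) = n.+1 by rewrite size_rem // sz.
have nn' : forall v, v \in rem m s -> 0 <= v by move=> v /mem_rem; exact: nn.
have [u [w [wu [v' v's v'w] eS eQ eH]]] := IH _ sz' nn'.
have mw : m <= w by apply: le_trans (mle _ (mem_rem v's)) v'w.
have [t [q [mq qt e1 e2 e3]]] := @core3w n%:R u w m (ler0n _ _) (nn _ ms) mw wu.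
exists t, q; split => //.
- by exists m.
- rewrite -natr1 /sS (big_rem m) //= e1; rewrite /sS in eS; rewrite -eS; ring.
- rewrite -natr1 /sQ (big_rem m) //= e2; rewrite /sQ in eQ; rewrite -eQ; ring.
- rewrite -natr1 /sH (big_rem m) //=; apply: (le_trans e3).
  rewrite /sH in eH; lra.
Qed.
End HT.


Section Main.
Variable R : realType.

Lemma xlnx_hh (u : R) : xlnx u = hh u.
Proof. by rewrite /xlnx /hh; case: eqP => [->|//]; rewrite mul0r. Qed.

Lemma spike_sum (N : nat) (k : 'I_N) (a : R) (f : R -> R) :
  \sum_(i < N) f (spike k a i) = f a + (N.-1)%:R * f ((1 - a) / (N.-1)%:R).
Proof.
rewrite (bigD1 k) //= /spike eqxx; congr (_ + _).
rewrite (eq_bigr (fun _ => f ((1 - a) / (N.-1)%:R))); last by move=> i /negbTE ->.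
by rewrite sumr_const cardC1 card_ord mulr_natl.
Qed.

Lemma diseq_expand (N : nat) (p : 'I_N -> R) :
  disequilibrium p = \sum_(i < N) p i ^+ 2 - 2 * N%:R^-1 * \sum_(i < N) p i + N%:R * N%:R^-1 ^+ 2.
Proof.
rewrite /disequilibrium.
rewrite (eq_bigr (fun i => p i ^+ 2 + ((- (2 * N%:R^-1)) * p i + N%:R^-1 ^+ 2))); last by move=> i _; ring.
rewrite big_split /= big_split /= -mulr_sumr sumr_const card_ord mulr_natl; ring.
Qed.

Lemma seq_sum (N : nat) (p : 'I_N -> R) (F : R -> R) :
  \sum_(v <- [seq p i | i <- index_enum 'I_N]) F v = \sum_(i < N) F (p i).
Proof. by rewrite big_map. Qed.

Lemma size_ie (T : Type) N (p : 'I_N -> T) : size [seq p i | i <- index_enum 'I_N] = N.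
Proof. by rewrite size_map /index_enum unlock -enumT -cardT card_ord. Qed.

Lemma dom_spike (N : nat) (hN : (2 <= N)%N) (k : 'I_N) (p : 'I_N -> R) :
  in_simplex p -> exists t : R, 0 <= t <= 1 /\ complexitySQ p <= complexitySQ (spike k t).
Proof.
move=> [p01 p1].
set s := [seq p i | i <- index_enum 'I_N].
have N0 : (0 < N)%N by apply: leq_trans hN.
have sz : size s = (N.-1).+1 by rewrite size_ie prednK.
have nn : forall v, v \in s -> 0 <= v.
  by move=> v /mapP [i _ ->]; case/andP: (p01 i).
have [t [q [qt [v vs vq] e1 e2 e3]]] := HT sz nn.
have q0 : 0 <= q by apply: le_trans (nn v vs) vq.
set M := (N.-1)%:R : R.
have M0 : 0 < M by rewrite /M ltr0n -ltnS prednK.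
have E1 : sS s = 1 by rewrite /sS big_map.
have E2 : sQ s = \sum_(i < N) p i ^+ 2 by rewrite /sQ big_map.
have E3 : sH s = \sum_(i < N) xlnx (p i).
  by rewrite /sH big_map; apply: eq_bigr => i _; rewrite xlnx_hh.
rewrite E1 in e1; rewrite E2 in e2; rewrite E3 in e3.
have hq : (1 - t) / M = q by rewrite -e1; field; rewrite gt_eqF.
have t1 : t <= 1 by have := mulr_ge0 (ltW M0) q0; lra.
exists t; split; first by rewrite (le_trans q0 qt) t1.
have L0 : 0 < ln (N%:R : R) by apply: ln_gt0; rewrite ltr1n.
have DE : disequilibrium (spike k t) = disequilibrium p.
  rewrite !diseq_expand (spike_sum k t (fun v => v ^+ 2)) (spike_sum k t (fun v => v)) hq.
  by rewrite p1 -e2 e1.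
have HE : entropyN p <= entropyN (spike k t).
  rewrite /entropyN ler_pM2r ?invr_gt0 // lerN2.
  rewrite (spike_sum k t (@xlnx R)) hq !xlnx_hh; exact: e3.
rewrite /complexitySQ DE; apply: ler_wpM2r => //.
rewrite /disequilibrium; apply: sumr_ge0 => i _; exact: sqr_ge0.
Qed.

Lemma cont_spikeC (N : nat) (hN : (2 <= N)%N) (k : 'I_N) :
  continuous (fun a : R => complexitySQ (spike k a)).
Proof.
set M := (N.-1)%:R : R.
set L := ln (N%:R : R).
set c := (N%:R : R)^-1.
have -> : (fun a : R => complexitySQ (spike k a)) =
  (fun a => (- (hh a + M * hh ((1 - a) / M)) / L) *
    ((a ^+ 2 + M * ((1 - a) / M) ^+ 2) - 2 * c * (a + M * ((1 - a) / M)) + N%:R * c ^+ 2)).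
  apply/funext => a.
  rewrite /complexitySQ /entropyN diseq_expand (spike_sum k a (@xlnx R)) !xlnx_hh.
  by rewrite (spike_sum k a (fun v => v ^+ 2)) (spike_sum k a (fun v => v)).
move=> a.
have := (@continuousM R R (fun a => - (hh a + M * hh ((1 - a) / M)) / L) (fun a => (a ^+ 2 + M * ((1 - a) / M) ^+ 2) - 2 * c * (a + M * ((1 - a) / M)) + N%:R * c ^+ 2) a).
move=> H; apply: H; last first.
  apply: der_cont => v; exact: ex_derive.
apply: continuousM; last exact: cst_continuous.
apply: continuousN.
have -> : (fun a => hh a + M * hh ((1 - a) / M)) = (@hh R) + (fun a => M * hh ((1 - a) / M)) by [].
apply: continuousD; first exact: hh_cont.
apply: continuousM; first exact: cst_continuous.
apply: continuous_comp; last exact: hh_cont.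
apply: der_cont => v; exact: ex_derive.
Qed.
End Main.

Unset Implicit Arguments.

Theorem lemma3 (R : realType) (N : nat) (hN : (2 <= N)%N) :
  exists (k : 'I_N) (pmax : R),
    0 <= pmax <= 1 /\ in_simplex (spike k pmax) /\
    (forall p : 'I_N -> R, in_simplex p ->
       complexitySQ p <= complexitySQ (spike k pmax)).
Proof.
have N0 : (0 < N)%N by apply: leq_trans hN.
pose k0 : 'I_N := Ordinal N0.
have hc : ({within `[(0:R), 1], continuous (fun a : R => complexitySQ (spike k0 a))})%classic.
  apply: continuous_subspaceT; exact: cont_spikeC.
have [c c01 cmax] := EVT_max ler01 hc.
have [c0 c1] : 0 <= c /\ c <= 1 by move: c01; rewrite in_itv /= => /andP[].
exists k0, c; split; first by rewrite c0 c1.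
have M0 : 0 < (N.-1)%:R :> R by rewrite ltr0n -ltnS prednK.
have M1 : 1 <= (N.-1)%:R :> R by rewrite ler1n -ltnS prednK.
split.
  split.
    move=> i; rewrite /spike; case: eqP => _; first by rewrite c0 c1.
    apply/andP; split; first by rewrite divr_ge0 ?subr_ge0 // ltW.
    rewrite ler_pdivrMr // mul1r; lra.
  rewrite (spike_sum k0 c (fun v => v)); field; by rewrite gt_eqF.
move=> p hp.
have [t [t01 le]] := dom_spike hN k0 hp.
apply: (le_trans le); apply: cmax.
by rewrite in_itv /=.
Qed.
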